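(* Let $F$ and $H$ be two CNF formulae built over two disjoint sets of variables, and let $x$ be a variable occurring in neither of them. If both $F$ and $H$ are unsatisfiable, then $x$ is an optimal backtracking branching variable for $F +_x H = (F \vee x) \cup (H \vee \neg x)$, i.e., $x$ is the root of some minimum-size backtracking search tree of $F +_x H$.
   Context: A CNF formula is a finite set of clauses (disjunctions of literals); the empty clause is unsatisfiable. For a formula $F$ and a literal $l$, $l \vee F = F \vee l = \{ l \vee \gamma \mid \gamma \in F\}$. For a partial truth assignment $I$ (a set of literals), $F|I$ is the formula obtained by deleting every clause containing a literal true under $I$ and deleting from the remaining clauses every literal false under $I$. $Var(F)$ is the set of variables of $F$. A binary tree is either the empty tree $()$ or a triple $(x~T_1~T_2)$ with a node labelled $x$, left subtree $T_1$ and right subtree $T_2$; its size is its number of nodes. A backtracking search tree (BST) of $F$ is: the empty tree if $F$ contains the empty clause; otherwise a tree $(x~T_1~T_2)$ where $x \in Var(F)$, $T_1$ is a BST of $F|\{\neg x\}$ and $T_2$ is a BST of $F|\{x\}$. An optimal BST is a BST of minimum size. *)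

(* Defs.v *)
From mathcomp Require Import all_boot.
Set Implicit Arguments. Unset Strict Implicit. Unset Printing Implicit Defensive.

(* Variables are natural numbers; a literal is a pair (variable, polarity),
   polarity true = positive literal x, false = negative literal ~x. *)
Definition var := nat.
Definition lit := (nat * bool)%type.
Definition pos (x : var) : lit := (x, true).
Definition neg (x : var) : lit := (x, false).
Definition negl (l : lit) : lit := (l.1, ~~ l.2).

(* A clause is a finite set of literals, a CNF formula a finite set of
   clauses; both are represented by (finite) lists, read as sets. *)
Definition clause := seq lit.
Definition formula := seq clause.

Definition Var (F : formula) : seq var := flatten [seq [seq l.1 | l <- c] | c <- F].

Definition has_empty (F : formula) : bool := has (fun c : clause => nilp c) F.

Definition restrict (F : formula) (I : seq lit) : formula :=
  [seq [seq m <- c | negl m \notin I] | c <- F & ~~ has (fun m => m \in I) c].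

Definition or_lit (l : lit) (F : formula) : formula := [seq l :: c | c <- F].

Definition plus_x (F : formula) (x : var) (H : formula) : formula :=
  or_lit (pos x) F ++ or_lit (neg x) H.

Definition lit_true (a : var -> bool) (l : lit) : bool := a l.1 == l.2.
Definition satisfies (a : var -> bool) (F : formula) : bool :=
  all (fun c : clause => has (lit_true a) c) F.
Definition unsat (F : formula) : Prop := forall a : var -> bool, ~~ satisfies a F.

Inductive tree : Type :=
| Leaf : tree
| Node : var -> tree -> tree -> tree.

Fixpoint tsize (T : tree) : nat :=
  match T with Leaf => 0 | Node _ T1 T2 => (tsize T1 + tsize T2).+1 end.

Inductive is_bst : formula -> tree -> Prop :=
| bst_leaf F : has_empty F -> is_bst F Leaf
| bst_node F x T1 T2 :
    ~~ has_empty F -> x \in Var F ->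
    is_bst (restrict F [:: neg x]) T1 ->
    is_bst (restrict F [:: pos x]) T2 ->
    is_bst F (Node x T1 T2).

Definition optimal_bst (F : formula) (T : tree) : Prop :=
  is_bst F T /\ forall T', is_bst F T' -> tsize T <= tsize T'.

(* Main.v *)
From Stdlib Require Import Classical.
Require Import Defs.
From mathcomp Require Import all_boot.
From mathcomp Require Import zify.
Set Implicit Arguments. Unset Strict Implicit.

Lemma VarP F v : v \in Var F <-> exists2 c, c \in F & v \in [seq l.1 | l <- c].
Proof.
rewrite /Var; split => [/flattenP [s /mapP [c Hc ->] Hv]|[c Hc Hv]].
  by exists c.
by apply/flattenP; exists [seq l.1 | l <- c] => //; apply: map_f.
Qed.

Lemma Var_cons c F : Var (c :: F) = [seq l.1 | l <- c] ++ Var F.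
Proof. by []. Qed.

Lemma Var_cat A B : Var (A ++ B) = Var A ++ Var B.
Proof. by rewrite /Var map_cat flatten_cat. Qed.

Lemma lit_cases (m l : lit) : m.1 = l.1 -> m = l \/ negl m = l.
Proof. by case: m l => [a b] [a' b'] /= ->; case: b; case: b'; auto. Qed.

Lemma neglD l : (l == negl l) = false.
Proof. by case: l => a b; rewrite /negl /= xpair_eqE eqxx /=; case: b. Qed.

Lemma restrict_noVar F l : l.1 \notin Var F -> restrict F [:: l] = F.
Proof.
rewrite /restrict; elim: F => //= c F IH.
rewrite Var_cons mem_cat negb_or => /andP[Hc HF].
have -> : has (fun m => m \in [:: l]) c = false.
  apply/hasP => -[m Hm]; rewrite inE => /eqP E; subst.
  by rewrite map_f in Hc.
rewrite /= IH //; congr (_ :: _).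
apply/all_filterP; apply/allP => m Hm; rewrite inE; apply/negP => /eqP E.
by move: Hc; rewrite -E /= map_f.
Qed.

Lemma or_lit_opp l F : restrict (or_lit l F) [:: negl l] = restrict F [:: negl l].
Proof.
rewrite /restrict /or_lit; elim: F => //= c F IH.
rewrite inE neglD /=.
by case: (has _ c) => /=; rewrite ?inE ?eqxx /= ?IH.
Qed.

Lemma or_lit_same l F : restrict (or_lit l F) [:: l] = [::].
Proof.
by rewrite /restrict /or_lit; elim: F => //= c F IH; rewrite inE eqxx.
Qed.

Lemma or_lit_diff l m F : l.1 != m.1 ->
  restrict (or_lit l F) [:: m] = or_lit l (restrict F [:: m]).
Proof.
move=> Hlm; rewrite /restrict /or_lit; elim: F => //= c F IH.
have E1 : (l == m) = false.
  by apply/negP => /eqP E; rewrite E eqxx in Hlm.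
have E2 : (negl l == m) = false.
  by apply/negP => /eqP E; rewrite -E /= eqxx in Hlm.
rewrite inE E1 /=.
by case: (has _ c) => /=; rewrite ?inE ?E2 /= ?IH.
Qed.

Lemma Var_restrict F l v : v \in Var (restrict F [:: l]) -> v \in Var F /\ v != l.1.
Proof.
move/VarP => [c' /mapP [c]]; rewrite mem_filter => /andP [Hh Hc] -> /mapP [m].
rewrite mem_filter => /andP [Hq Hm] ->; split.
  by apply/VarP; exists c => //; apply: map_f.
apply/eqP => /lit_cases [E|E].
  by move/hasPn: Hh => /(_ m Hm); rewrite E inE eqxx.
by move: Hq; rewrite E inE eqxx.
Qed.

Lemma Var_or_lit l F v : v \in Var (or_lit l F) -> v = l.1 \/ v \in Var F.
Proof.
move/VarP => [c' /mapP [c Hc ->]]; rewrite /= inE => /orP [/eqP ->|Hv]; first by left.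
by right; apply/VarP; exists c.
Qed.

Lemma Var_plus F x H v : v \in Var (plus_x F x H) -> [\/ v = x, v \in Var F | v \in Var H].
Proof.
rewrite /plus_x Var_cat mem_cat => /orP [/Var_or_lit [->|]|/Var_or_lit [->|]].
- by apply: Or31.
- by apply: Or32.
- by apply: Or31.
- by apply: Or33.
Qed.

Lemma has_empty_plus F x H : has_empty (plus_x F x H) = false.
Proof.
rewrite /has_empty /plus_x /or_lit has_cat.
by apply/norP; split; apply/hasPn => c /mapP [c' _ ->].
Qed.

Lemma restrict_plus_neg F x H : x \notin Var F ->
  restrict (plus_x F x H) [:: neg x] = F.
Proof.
move=> HxF; rewrite /plus_x.
have E : restrict (or_lit (pos x) F ++ or_lit (neg x) H) [:: neg x] =
  restrict (or_lit (pos x) F) [:: negl (pos x)] ++ restrict (or_lit (neg x) H) [:: neg x].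
  by rewrite /restrict filter_cat map_cat.
by rewrite E or_lit_opp or_lit_same cats0 restrict_noVar.
Qed.

Lemma restrict_plus_pos F x H : x \notin Var H ->
  restrict (plus_x F x H) [:: pos x] = H.
Proof.
move=> HxH; rewrite /plus_x.
have E : restrict (or_lit (pos x) F ++ or_lit (neg x) H) [:: pos x] =
  restrict (or_lit (pos x) F) [:: pos x] ++ restrict (or_lit (neg x) H) [:: negl (neg x)].
  by rewrite /restrict filter_cat map_cat.
by rewrite E or_lit_opp or_lit_same restrict_noVar.
Qed.

Lemma restrict_cat A B I : restrict (A ++ B) I = restrict A I ++ restrict B I.
Proof. by rewrite /restrict filter_cat map_cat. Qed.

Lemma plus_restrict_F F x H k : k.1 != x -> k.1 \notin Var H ->
  restrict (plus_x F x H) [:: k] = plus_x (restrict F [:: k]) x H.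
Proof.
move=> Hkx HkH; rewrite /plus_x restrict_cat !or_lit_diff /=; first by rewrite (restrict_noVar HkH).
  by rewrite eq_sym.
by rewrite eq_sym.
Qed.

Lemma plus_restrict_H F x H k : k.1 != x -> k.1 \notin Var F ->
  restrict (plus_x F x H) [:: k] = plus_x F x (restrict H [:: k]).
Proof.
move=> Hkx HkF; rewrite /plus_x restrict_cat !or_lit_diff /=; first by rewrite (restrict_noVar HkF).
  by rewrite eq_sym.
by rewrite eq_sym.
Qed.

Lemma claim T : forall F H x,
  (forall v, v \in Var F -> v \notin Var H) -> x \notin Var F -> x \notin Var H ->
  is_bst (plus_x F x H) T ->
  exists TF TH, is_bst F TF /\ is_bst H TH /\ Defs.tsize TF + Defs.tsize TH < Defs.tsize T.
Proof.
elim: T => [|y T1 IH1 T2 IH2] F H x Hd HxF HxH Hb.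
  by inversion Hb; rewrite has_empty_plus in H0.
inversion Hb as [|F0 y0 T1' T2' Hne Hy Hb1 Hb2]; subst.
case: (eqVneq y x) => [E|Hyx].
  subst y; rewrite restrict_plus_neg // in Hb1; rewrite restrict_plus_pos // in Hb2.
  by exists T1, T2; split.
case: (Var_plus Hy) => [E|HyF|HyH]; first by rewrite E eqxx in Hyx.
- have HyH := Hd _ HyF.
  rewrite plus_restrict_F // in Hb1; rewrite plus_restrict_F // in Hb2.
  have [TF1 [TH1 [B1 [B1' S1]]]] := IH1 _ _ _
    (fun v Hv => Hd v (proj1 (Var_restrict Hv)))
    (introN idP (fun Hx => negP HxF (proj1 (Var_restrict Hx)))) HxH Hb1.
  have [TF2 [TH2 [B2 [B2' S2]]]] := IH2 _ _ _
    (fun v Hv => Hd v (proj1 (Var_restrict Hv)))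
    (introN idP (fun Hx => negP HxF (proj1 (Var_restrict Hx)))) HxH Hb2.
  case: (boolP (has_empty F)) => He.
    exists Leaf, TH1; split; [exact: bst_leaf|split => //].
    simpl; lia.
  exists (Node y TF1 TF2), TH1; split; [exact: bst_node|split => //].
  simpl; lia.
- have HyF : y \notin Var F by apply/negP => /Hd; rewrite HyH.
  rewrite plus_restrict_H // in Hb1; rewrite plus_restrict_H // in Hb2.
  have Hd' : forall l v, v \in Var F -> v \notin Var (restrict H [:: l]).
    by move=> l v Hv; apply/negP => /Var_restrict [Hv' _]; move: (Hd v Hv); rewrite Hv'.
  have [TF1 [TH1 [B1 [B1' S1]]]] := IH1 _ _ _ (Hd' _) HxF
    (introN idP (fun Hx => negP HxH (proj1 (Var_restrict Hx)))) Hb1.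
  have [TF2 [TH2 [B2 [B2' S2]]]] := IH2 _ _ _ (Hd' _) HxF
    (introN idP (fun Hx => negP HxH (proj1 (Var_restrict Hx)))) Hb2.
  case: (boolP (has_empty H)) => He.
    exists TF1, Leaf; split => //; split; [exact: bst_leaf|].
    simpl; lia.
  exists TF1, (Node y TH1 TH2); split => //; split; [exact: bst_node|].
  simpl; lia.
Qed.

Lemma unsat_restrict F l : unsat F -> unsat (restrict F [:: l]).
Proof.
move=> uF a; apply/negP => Ha.
pose a' := fun v => if v == l.1 then l.2 else a v.
move: (uF a') => /negP; apply; apply/allP => c Hc.
case: (boolP (has (fun m => m \in [:: l]) c)) => Hh.
  move/hasP: Hh => [m Hm]; rewrite inE => /eqP E; subst m.
  by apply/hasP; exists l => //; rewrite /lit_true /a' eqxx.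
have Hc' : [seq m <- c | negl m \notin [:: l]] \in restrict F [:: l].
  by apply/mapP; exists c => //; rewrite mem_filter Hh.
move/allP: Ha => /(_ _ Hc') /hasP [m]; rewrite mem_filter => /andP [Hq Hm] Ht.
apply/hasP; exists m => //; rewrite /lit_true /a'.
case: (eqVneq m.1 l.1) => [E0|NE]; last by move: Ht; rewrite /lit_true.
case: (lit_cases E0) => E.
  by move/hasPn: Hh => /(_ m Hm); rewrite E inE eqxx.
by move: Hq; rewrite E inE eqxx.
Qed.

Lemma unsat_nil : ~ unsat [::].
Proof. by move=> /(_ (fun _ => true)). Qed.

Lemma size_restrict F l : l.1 \in Var F ->
  size (undup (Var (restrict F [:: l]))) < size (undup (Var F)).
Proof.
move=> Hl.
have := @uniq_leq_size _ (l.1 :: undup (Var (restrict F [:: l]))) (undup (Var F)).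
apply.
  rewrite /= undup_uniq andbT mem_undup; apply/negP => /Var_restrict [_].
  by rewrite eqxx.
move=> v; rewrite inE mem_undup => /orP [/eqP ->|/Var_restrict [Hv _]]; by rewrite mem_undup.
Qed.

Lemma exists_bst F : unsat F -> exists T, is_bst F T.
Proof.
suff : forall n F, size (undup (Var F)) <= n -> unsat F -> exists T, is_bst F T.
  by move=> /(_ _ F (leqnn _)).
elim => [|n IH] {}F Hn uF; (case: (boolP (has_empty F)) => He;
  [by exists Leaf; apply: bst_leaf|]);
  (have [y Hy] : exists y, y \in Var F by
    case: F Hn uF He => [_ /unsat_nil //|c F] _ _;
    rewrite /has_empty /= negb_or => /andP [];
    case: c => [//|m c] _ _; exists m.1; rewrite Var_cons /= inE eqxx).
  by move: Hn; rewrite leqn0 => /eqP/size0nil E; move: Hy; rewrite -mem_undup E.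
have [T1 HT1] := IH (restrict F [:: neg y])
  (leq_trans (size_restrict (l := neg y) Hy) Hn) (unsat_restrict _ uF).
have [T2 HT2] := IH (restrict F [:: pos y])
  (leq_trans (size_restrict (l := pos y) Hy) Hn) (unsat_restrict _ uF).
by exists (Node y T1 T2); apply: bst_node.
Qed.

Lemma exists_opt G : (exists T, is_bst G T) -> exists T, optimal_bst G T.
Proof.
move=> [T HT].
suff : forall n T, Defs.tsize T <= n -> is_bst G T -> exists T, optimal_bst G T.
  by move=> /(_ _ T (leqnn _) HT).
elim => [|n IH] T0 Hn HT0.
  exists T0; split => // T' _; move: Hn; rewrite leqn0 => /eqP ->; by [].
case: (classic (exists T', is_bst G T' /\ Defs.tsize T' < Defs.tsize T0)).
  move=> [T' [HT' Hs]]; apply: (IH T') => //; lia.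
move=> Hno; exists T0; split => // T' HT'.
rewrite leqNgt; apply/negP => Hlt; apply: Hno; by exists T'.
Qed.

Theorem lemma4 (F H : formula) (x : var) :
  (forall v, v \in Var F -> v \notin Var H) ->
  x \notin Var F -> x \notin Var H ->
  unsat F -> unsat H ->
  exists T1 T2, optimal_bst (plus_x F x H) (Node x T1 T2).
Proof.
move=> Hd HxF HxH uF uH.
have HxG : x \in Var (plus_x F x H).
  case: F Hd HxF uF => [_ _ /unsat_nil //|c F] _ _ _.
  by rewrite /plus_x /or_lit /= /Var /= inE eqxx.
have mk : forall TF TH, is_bst F TF -> is_bst H TH -> is_bst (plus_x F x H) (Node x TF TH).
  move=> TF TH BF BH; apply: bst_node => //; first by rewrite has_empty_plus.
    by rewrite restrict_plus_neg.
  by rewrite restrict_plus_pos.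
have [TF0 BF0] := exists_bst uF.
have [TH0 BH0] := exists_bst uH.
have [Tm [HTm Hopt]] := exists_opt (ex_intro _ _ (mk _ _ BF0 BH0)).
have [TF [TH [BF [BH Hs]]]] := claim Hd HxF HxH HTm.
exists TF, TH; split; first exact: mk.
move=> T' HT'; apply: leq_trans (Hopt _ HT'); by [].
Qed.
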